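(* Let $\mathcal{X}=G^{\min}/P$ be the affine Grassmannian of the minimal affine Kac–Moody group $\widehat{SL_2}$, and let $c^k_{n,m}\in\mathbb{Z}[\alpha_0,\alpha_1]$ be the $T$-equivariant Schubert structure constants, $\hat{\varepsilon}_n\cdot\hat{\varepsilon}_m=\sum_{k=\max\{n,m\}}^{n+m}c^k_{n,m}\hat{\varepsilon}_k$. Then for all integers $n,m\ge1$, $c^{n+m}_{n,m}=\binom{n+m}{n}$ and $$c^{n+m-1}_{n,m}= \begin{cases} \frac{1}{4}\cdot\frac{(n+m)!}{(n-1)!(m-1)!}(\alpha_0+\alpha_1) & n,m\text{ even},\\[1ex] \frac{1}{4}\cdot\frac{(n+m)!}{n!\,m!}\big((1+nm)\alpha_0+(-1+nm)\alpha_1\big) & n,m\text{ odd},\\[1ex] \frac{1}{4}\cdot\frac{(n+m-1)!}{(n-1)!\,m!}\big((-1+nm+m^2)\alpha_0+(1+nm+m^2)\alpha_1\big) & n\text{ even}, m\text{ odd},\\[1ex] \frac{1}{4}\cdot\frac{(n+m-1)!}{n!\,(m-1)!}\big((-1+nm+n^2)\alpha_0+(1+nm+n^2)\alpha_1\big) & n\text{ odd}, m\text{ even}. \end{cases}$$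
   Context: $T$ is the adjoint torus of $\widehat{SL_2}$, $H^\bullet_T(\mathrm{pt})=\mathbb{Z}[\alpha_0,\alpha_1]$ (polynomials in the simple roots), and $\{\hat{\varepsilon}_i\}_{i\ge0}$ is the $T$-equivariant Schubert basis of $H^\bullet_T(\mathcal{X})$ (Kumar's basis), indexed by $w_i$, the alternating word of length $i$ in $s_0,s_1$ ending in $s_0$, where $P$ is the maximal parabolic with Weyl group $\{e,s_1\}$. It satisfies $\hat\varepsilon_0=1$ and the equivariant Chevalley formula $\hat{\varepsilon}_1\cdot\hat{\varepsilon}_m=q_m\hat{\varepsilon}_m+(m+1)\hat{\varepsilon}_{m+1}$ with $q_m=\lceil m/2\rceil^2\alpha_0+(\lfloor m/2\rfloor^2+\lfloor m/2\rfloor)\alpha_1$. The constant $c^k_{n,m}$ is homogeneous of degree $n+m-k$ in $\alpha_0,\alpha_1$. *)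

(* Defs.v *)
From HB Require Import structures.
From mathcomp Require Import all_boot all_order all_algebra.
From mathcomp Require Import mpoly.
Set Implicit Arguments. Unset Strict Implicit. Unset Printing Implicit Defensive.
Import Order.TTheory GRing.Theory Num.Theory.
Local Open Scope ring_scope.

(* H^*_T(pt) = Z[alpha0, alpha1] *)
Definition HT := {mpoly int[2]}.
Definition alpha0 {R : nzRingType} : {mpoly R[2]} := 'X_(@ord0 1).
Definition alpha1 {R : nzRingType} : {mpoly R[2]} := 'X_(@ord_max 1).

Definition qm (m : nat) : HT :=
  ((uphalf m) ^ 2)%:R *: alpha0 + ((m./2) ^ 2 + m./2)%:R *: alpha1.

(* This is the structure of H^*_T(X) with
   Kumar's basis described in the context. *)
Definition lin_indep (A : lmodType HT) (eps : nat -> A) : Prop :=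
  forall (N : nat) (a : nat -> HT),
    \sum_(k < N) a k *: eps k = 0 -> forall k, (k < N)%N -> a k = 0.

Definition SchubertBasis (A : comAlgType HT) (eps : nat -> A) : Prop :=
  [/\ lin_indep eps,
      eps 0%N = 1 &
      forall m : nat, eps 1%N * eps m = qm m *: eps m + (m.+1)%:R *: eps m.+1].

Definition StructConsts (A : comAlgType HT) (eps : nat -> A)
  (c : nat -> nat -> nat -> HT) : Prop :=
  forall n m : nat,
    eps n * eps m = \sum_(maxn n m <= k < (n + m).+1) c n m k *: eps k.

Definition toQ (p : HT) : {mpoly rat[2]} := map_mpoly (fun z : int => z%:~R) p.

(* Main.v *)
Require Import Defs.
From HB Require Import structures.
From mathcomp Require Import all_boot all_order all_algebra.
From mathcomp Require Import mpoly.
From mathcomp Require Import ring lra zify.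
Import Order.TTheory GRing.Theory Num.Theory.
Local Open Scope ring_scope.

Definition Bq n m : rat := ('C(n+m,n))%:R.
Definition g0 (n m : nat) : rat :=
  if ~~ odd n && ~~ odd m then (n * m)%:R
  else if odd n && odd m then 1 + (n * m)%:R
  else if ~~ odd n && odd m then n%:R * ((n * m + m^2)%:R - 1) / (n+m)%:R
  else m%:R * ((n * m + n^2)%:R - 1) / (n+m)%:R.
Definition g1 (n m : nat) : rat :=
  if ~~ odd n && ~~ odd m then (n * m)%:R
  else if odd n && odd m then (n * m)%:R - 1
  else if ~~ odd n && odd m then n%:R * ((n * m + m^2)%:R + 1) / (n+m)%:R
  else m%:R * ((n * m + n^2)%:R + 1) / (n+m)%:R.
Definition Q0 (k : nat) : rat := ((uphalf k)^2)%:R.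
Definition Q1 (k : nat) : rat := ((k./2)^2 + k./2)%:R.

Lemma hR k : (k./2)%:R = (k%:R - (odd k)%:R)/2 :> rat.
Proof. rewrite -{2}(odd_double_half k) natrD -muln2 natrM; by field. Qed.
Lemma uhR k : (uphalf k)%:R = (odd k)%:R + (k%:R - (odd k)%:R)/2 :> rat.
Proof. by rewrite uphalf_half natrD hR. Qed.

Lemma BqS n m : Bq n.+1 m = Bq n m * (n+m).+1%:R / n.+1%:R.
Proof.
have := mul_bin_diag (n.+1 + m) n; rewrite addSn /= => /(congr1 (fun k => k%:R : rat)).
rewrite !natrM /Bq addSn => H. apply: (mulIf (x := (n.+1)%:R)); first by rewrite pnatr_eq0.
rewrite mulfVK ?pnatr_eq0 // mulrC -H; ring.
Qed.

Lemma rec0 n m : (1 <= m)%N ->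
  (n.+1)%:R * (Bq n.+1 m / 4 * g0 n.+1 m) = Bq n m * (Q0 (n+m) - Q0 n) + (n+m)%:R * (Bq n m/4 * g0 n m).
Proof.
move=> hm; rewrite BqS /Q0 /g0 !natrX !uhR oddD /=.
have h1 : (n+m)%:R != 0 :> rat by rewrite pnatr_eq0 -lt0n; lia.
have h2 : (n.+1+m)%:R != 0 :> rat by rewrite pnatr_eq0 -lt0n; lia.
have p1 : (1 + n%:R : rat) != 0 by rewrite addrC natr1 pnatr_eq0.
have p2 : (1 + n%:R + m%:R : rat) != 0 by rewrite -addrA -natrD addrC natr1 pnatr_eq0.
move: h1 h2; rewrite ?natrD ?natrM ?natrX.
case: (odd n); case: (odd m) => /= h1 h2.
all: field. all: rewrite ?h1 /=; try (apply/andP; split). all: first [exact p1 | exact p2 | done].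
Qed.

Lemma rec1 n m : (1 <= m)%N ->
  (n.+1)%:R * (Bq n.+1 m / 4 * g1 n.+1 m) = Bq n m * (Q1 (n+m) - Q1 n) + (n+m)%:R * (Bq n m/4 * g1 n m).
Proof.
move=> hm; rewrite BqS /Q1 /g1 !natrD !natrX !hR oddD /=.
have h1 : (n+m)%:R != 0 :> rat by rewrite pnatr_eq0 -lt0n; lia.
have h2 : (n.+1+m)%:R != 0 :> rat by rewrite pnatr_eq0 -lt0n; lia.
have p1 : (1 + n%:R : rat) != 0 by rewrite addrC natr1 pnatr_eq0.
have p2 : (1 + n%:R + m%:R : rat) != 0 by rewrite -addrA -natrD addrC natr1 pnatr_eq0.
move: h1 h2; rewrite ?natrD ?natrM ?natrX.
case: (odd n); case: (odd m) => /= h1 h2.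
all: field. all: rewrite ?h1 /=; try (apply/andP; split). all: first [exact p1 | exact p2 | done].
Qed.

Definition Gp (n m : nat) : {mpoly rat[2]} :=
  (Bq n m / 4 * g0 n m) *: alpha0 + (Bq n m / 4 * g1 n m) *: alpha1.

Lemma Gp_F n m : (1 <= n)%N -> (1 <= m)%N ->
  Gp n m =
      (if ~~ odd n && ~~ odd m then
         ((n + m)`!%:R / (4 * ((n.-1)`! * (m.-1)`!)%:R) : rat)
           *: (alpha0 + alpha1)
       else if odd n && odd m then
         ((n + m)`!%:R / (4 * (n`! * m`!)%:R) : rat)
           *: ((1 + (n * m)%:R : rat) *: alpha0 + (-1 + (n * m)%:R : rat) *: alpha1)
       else if ~~ odd n && odd m then
         ((n + m).-1`!%:R / (4 * ((n.-1)`! * m`!)%:R) : rat)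
           *: ((-1 + (n * m + m ^ 2)%:R : rat) *: alpha0
               + (1 + (n * m + m ^ 2)%:R : rat) *: alpha1)
       else
         ((n + m).-1`!%:R / (4 * (n`! * (m.-1)`!)%:R) : rat)
           *: ((-1 + (n * m + n ^ 2)%:R : rat) *: alpha0
               + (1 + (n * m + n ^ 2)%:R : rat) *: alpha1)).
Proof.
case: n => [|n] // _; case: m => [|m] // _.
have hB := @bin_fact (n.+1 + m.+1) n.+1 (leq_addr _ _).
rewrite addKn in hB.
rewrite /Gp /Bq /g0 /g1.
rewrite !scalerDr !scalerA.
move: hB => /(congr1 (fun k => k%:R : rat)).
rewrite addSn /= !factS !natrM.
have ha : n`!%:R != 0 :> rat by rewrite pnatr_eq0 -lt0n fact_gt0.
have hb : m`!%:R != 0 :> rat by rewrite pnatr_eq0 -lt0n fact_gt0.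
have hX : (n + m.+1)`!%:R != 0 :> rat by rewrite pnatr_eq0 -lt0n fact_gt0.
move: (n`!%:R) (m`!%:R) ((n + m.+1)`!%:R) ('C((n + m.+1).+1, n.+1)%:R : rat) ha hb hX.
move=> a b X B ha hb hX hB.
have n0 : 0 <= n%:R :> rat := ler0n _ _.
have m0 : 0 <= m%:R :> rat := ler0n _ _.
have pn : (1 + n%:R : rat) != 0 by apply: lt0r_neq0; lra.
have pm : (1 + m%:R : rat) != 0 by apply: lt0r_neq0; lra.
have pnm : (1 + (n%:R + (1 + m%:R)) : rat) != 0 by apply: lt0r_neq0; lra.
have pn' : (n.+1%:R : rat) != 0 by rewrite pnatr_eq0.
have pm' : (m.+1%:R : rat) != 0 by rewrite pnatr_eq0.
have -> : B = (n + m.+1).+1%:R * X / (n.+1%:R * a * (m.+1%:R * b)).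
  rewrite -hB; field; repeat (apply/andP; split); by [exact ha | exact hb | exact pn | exact pm | exact pnm | exact pn' | exact pm'].
rewrite ?natrD ?natrM ?natrX.
case: (odd n); case: (odd m) => /=.
all: congr (_ *: _ + _ *: _); field.
all: repeat (apply/andP; split); by [exact ha | exact hb | exact pn | exact pm | exact pnm].
Qed.
Lemma toQ0 : toQ 0 = 0. Proof. by rewrite /toQ raddf0. Qed.
Lemma toQD p q : toQ (p + q) = toQ p + toQ q. Proof. by rewrite /toQ raddfD. Qed.
Lemma toQM p q : toQ (p * q) = toQ p * toQ q. Proof. by rewrite /toQ rmorphM. Qed.
Lemma toQn k : toQ k%:R = k%:R. Proof. by rewrite /toQ rmorph_nat. Qed.

Definition lin (x0 x1 : rat) : {mpoly rat[2]} := x0 *: alpha0 + x1 *: alpha1.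
Lemma linD a b c' d : lin a b + lin c' d = lin (a + c') (b + d).
Proof. by rewrite /lin !scalerDl addrACA. Qed.
Lemma linB a b c' d : lin a b - lin c' d = lin (a - c') (b - d).
Proof. by rewrite /lin !scalerBl opprD addrACA. Qed.
Lemma linZ k a b : k *: lin a b = lin (k * a) (k * b).
Proof. by rewrite /lin scalerDr !scalerA. Qed.

Lemma toQ_qm k : toQ (qm k) = lin (Q0 k) (Q1 k).
Proof.
rewrite /toQ /qm raddfD /= !map_mpolyZ /lin /Q0 /Q1 /alpha0 /alpha1 !natz.
by rewrite /= !map_mpolyX.
Qed.

Lemma natC_ne0 (R : numDomainType) k : (k.+1%:R : {mpoly R[2]}) != 0.
Proof. by rewrite -mpolyC_nat mpolyC_eq0 pnatr_eq0. Qed.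

Lemma cancelS (R : numDomainType) k (x y : {mpoly R[2]}) :
  k.+1%:R * x = k.+1%:R * y -> x = y.
Proof. exact/mulfI/natC_ne0. Qed.

Lemma natmulZ k (p : {mpoly rat[2]}) : (k%:R : {mpoly rat[2]}) * p = (k%:R : rat) *: p.
Proof. by rewrite -mul_mpolyC mpolyC_nat. Qed.

Section Alg.
Variables (A : comAlgType HT) (eps : nat -> A) (c : nat -> nat -> nat -> HT).
Hypotheses (hS : SchubertBasis eps) (hC : StructConsts eps c).

Lemma coef_eq N (a b : nat -> HT) :
  \sum_(k < N) a k *: eps k = \sum_(k < N) b k *: eps k ->
  forall k, (k < N)%N -> a k = b k.
Proof.
move=> H k hk; case: hS => hli _ _.
apply/eqP; rewrite -subr_eq0; apply/eqP.
apply: (hli N (fun k => a k - b k)) => //.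
rewrite (eq_bigr (fun k : 'I_N => a k *: eps k - b k *: eps k)); last first.
  by move=> i _; rewrite scalerBl.
by rewrite sumrB H subrr.
Qed.

Definition Cc n m k := if (maxn n m <= k <= n + m)%N then c n m k else 0.

Lemma prod_sum n m N : (n + m < N)%N ->
  eps n * eps m = \sum_(k < N) Cc n m k *: eps k.
Proof.
move=> hN; rewrite hC.
rewrite (eq_bigr (fun k : 'I_N => if (maxn n m <= k <= n + m)%N then c n m k *: eps k else 0)); last first.
  by move=> i _; rewrite /Cc; case: ifP => _ //; rewrite scale0r.
rewrite -big_mkcond /= big_geq_mkord (big_ord_widen_cond N (fun i => true && (maxn n m <= i)%N) (fun i => c n m i *: eps i) hN).
by apply: eq_bigl => k /=.
Qed.

Definition hh n m k := if k is k'.+1 then Cc n m k' * k%:R else 0.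

Lemma main_id n m k : (k < (n + m).+2)%N ->
  Cc n m k * qm k + hh n m k = qm n * Cc n m k + n.+1%:R * Cc n.+1 m k.
Proof.
case: hS => _ h0 hch.
have e1 : eps 1 * (eps n * eps m) = (eps 1 * eps n) * eps m by rewrite mulrA.
rewrite (@prod_sum n m (n + m).+2) // hch mulrDl -!scalerAl in e1.
rewrite (@prod_sum n m (n + m).+2) // (@prod_sum n.+1 m (n + m).+2) ?addSn // in e1.
rewrite mulr_sumr !scaler_sumr in e1.
move: e1.
rewrite (eq_bigr (fun k : 'I_(n + m).+2 => (Cc n m k * qm k) *: eps k + (Cc n m k * k.+1%:R) *: eps k.+1)); last first.
  by move=> i _; rewrite -scalerAr hch scalerDr !scalerA.
rewrite big_split /=.
set S2 := (X in _ + X = _).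
have -> : S2 = \sum_(k < (n + m).+2) hh n m k *: eps k.
  have hz : Cc n m (n + m).+1 = 0.
    rewrite /Cc ifF //; apply/negbTE; rewrite negb_and -!ltnNge; apply/orP; right; lia.
  rewrite /S2 big_ord_recr /= hz mul0r scale0r addr0.
  rewrite [RHS]big_ord_recl /= ?mul0r scale0r add0r.
  by apply: eq_bigr => i _; rewrite /bump leq0n add0n add1n.
rewrite -big_split /= -big_split /=.
under eq_bigr do rewrite -scalerDl.
under [RHS]eq_bigr do rewrite !scalerA -scalerDl.
move=> e hk; exact: (@coef_eq _ (fun i => Cc n m i * qm i + hh n m i) (fun i => qm n * Cc n m i + n.+1%:R * Cc n.+1 m i) e k hk).
Qed.


Lemma R1 n m :
  c n m (n + m) * (n + m).+1%:R = n.+1%:R * c n.+1 m (n.+1 + m).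
Proof.
have := @main_id n m (n + m).+1 (ltnSn _).
have hz : Cc n m (n + m).+1 = 0.
  rewrite /Cc ifF //; apply/negbTE; rewrite negb_and -!ltnNge; apply/orP; right; lia.
rewrite hz mul0r mulr0 !add0r /hh /Cc ifT; last by apply/andP; split; lia.
rewrite ifT; last by apply/andP; split; lia.
by rewrite addSn.
Qed.

Lemma R2 n m : (1 <= m)%N ->
  c n m (n + m) * qm (n + m) + Cc n m (n + m).-1 * (n + m)%:R
  = qm n * c n m (n + m) + n.+1%:R * c n.+1 m (n + m).
Proof.
move=> hm.
have := @main_id n m (n + m) (leqW (ltnSn _)).
have hk : hh n m (n + m) = Cc n m (n + m).-1 * (n + m)%:R.
  by rewrite /hh; have -> : (n + m)%N = (n + m).-1.+1 by lia.
rewrite hk {1 3}/Cc ifT; last by apply/andP; split; lia.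
rewrite /Cc [in X in _ = X -> _]ifT //; apply/andP; split; lia.
Qed.

Lemma c00 m : c 0 m m = 1.
Proof.
case: hS => _ h0 _.
have e : eps 0 * eps m = \sum_(k < m.+1) (if k == m :> nat then 1 else 0) *: eps k.
  rewrite h0 mul1r (bigD1 (Ordinal (ltnSn m))) //= eqxx scale1r big1 ?addr0 //.
  move=> i hi; rewrite ifF ?scale0r //; apply/negbTE; apply: contra hi => /eqP H.
  by apply/eqP/val_inj.
rewrite (@prod_sum 0 m m.+1) // in e.
have := @coef_eq _ _ (fun k => if k == m then 1 else 0) e m (ltnSn m).
by rewrite eqxx /Cc ifT //; apply/andP; split; lia.
Qed.

Lemma mainP m : (1 <= m)%N -> forall n,
  c n m (n + m) = ('C(n + m, n))%:R /\ toQ (Cc n m (n + m).-1) = Gp n m.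
Proof.
move=> hm; elim=> [|n [IH1 IH2]].
  split; first by rewrite add0n c00 bin0.
  rewrite /Cc ifF; last first.
    apply/negbTE; rewrite negb_and -!ltnNge; apply/orP; left; rewrite max0n add0n; lia.
  rewrite toQ0 /Gp /g0 /g1 /= mul0n; case: (odd m) => /=;
  by rewrite ?mul0r ?mulr0 ?scale0r ?addr0.
split.
  apply: (@cancelS _ n).
  rewrite -R1 IH1 -!natrM; congr (_%:R).
  by rewrite mulnC -mul_bin_diag addSn.
have e := @R2 n m hm.
move/(congr1 toQ): e.
rewrite !toQD !toQM !toQ_qm IH1 IH2 !toQn.
rewrite addSn /=.
rewrite [Cc n.+1 m _]/Cc ifT; last by apply/andP; split; lia.
move=> e; apply: (@cancelS _ n).
have -> : n.+1%:R * toQ (c n.+1 m (n + m)) = 'C(n + m, n)%:R * lin (Q0 (n + m)) (Q1 (n + m)) + Gp n m * (n + m)%:R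
   - lin (Q0 n) (Q1 n) * 'C(n + m, n)%:R by rewrite e addrAC subrr add0r.
rewrite [Gp n m * _]mulrC [lin (Q0 n) _ * _]mulrC !natmulZ /Gp -/(lin _ _) -/(lin _ _) !linZ linD linB.
congr lin; rewrite ?rec0 ?rec1 //; ring.
Qed.
End Alg.

Theorem mainTheorem6 (A : comAlgType HT) (eps : nat -> A)
  (c : nat -> nat -> nat -> HT) :
  SchubertBasis eps -> StructConsts eps c ->
  forall n m : nat, (1 <= n)%N -> (1 <= m)%N ->
    c n m (n + m)%N = ('C(n + m, n))%:R /\
    toQ (c n m (n + m).-1) =
      (if ~~ odd n && ~~ odd m then
         ((n + m)`!%:R / (4 * ((n.-1)`! * (m.-1)`!)%:R) : rat)
           *: (alpha0 + alpha1)
       else if odd n && odd m then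
         ((n + m)`!%:R / (4 * (n`! * m`!)%:R) : rat)
           *: ((1 + (n * m)%:R : rat) *: alpha0 + (-1 + (n * m)%:R : rat) *: alpha1)
       else if ~~ odd n && odd m then
         ((n + m).-1`!%:R / (4 * ((n.-1)`! * m`!)%:R) : rat)
           *: ((-1 + (n * m + m ^ 2)%:R : rat) *: alpha0
               + (1 + (n * m + m ^ 2)%:R : rat) *: alpha1)
       else
         ((n + m).-1`!%:R / (4 * (n`! * (m.-1)`!)%:R) : rat)
           *: ((-1 + (n * m + n ^ 2)%:R : rat) *: alpha0
               + (1 + (n * m + n ^ 2)%:R : rat) *: alpha1)).
Proof.
move=> hS hC n m hn hm.
have [h1 h2] := @mainP A eps c hS hC m hm n.
split; first exact: h1.
rewrite -Gp_F // -h2 /Cc ifT //; apply/andP; split; lia.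
Qed.
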